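(* Let $X$ be a finite nonempty set, $\mathcal F$ a family of subsets of $X$ whose union is $X$, with fractional covering number $\tau^*:=\tau^*(X,\mathcal F)$, and let $k$ be a positive integer. Then \[\tau_k(\mathcal F)\le\left\lceil\tau^*\left(k+\tfrac32\ln|X|+\tfrac32\sqrt{(4k+\ln|X|)\ln|X|}\right)\right\rceil\le\left\lceil 6\tau^*\max\{\ln|X|,k\}\right\rceil.\]
   Context: The $k$-fold covering number $\tau_k(\mathcal F)$ is the minimum cardinality of a multi-subfamily of $\mathcal F$ such that each point of $X$ is contained in at least $k$ members of the subfamily (counted with multiplicity). A fractional covering of $X$ by $\mathcal F$ is a map $w:\mathcal F\to[0,\infty)$ with $\sum_{F\in\mathcal F,\,x\in F}w(F)\ge1$ for all $x\in X$; the fractional covering number $\tau^*(X,\mathcal F)$ is the infimum of $\sum_{F\in\mathcal F}w(F)$ over all fractional coverings $w$. *)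

(* Defs.v *)
From Stdlib Require Import Reals ZArith.
From mathcomp Require Import all_boot.
Set Implicit Arguments. Unset Strict Implicit. Unset Printing Implicit Defensive.

Definition Rceil (x : R) : Z := (- Int_part (- x))%Z.

(* A multi-subfamily of F is given by multiplicities m : {set T} -> nat
   (only members of F are counted); its cardinality is the sum of multiplicities. *)
Definition multi_card (T : finType) (F : {set {set T}}) (m : {set T} -> nat) : nat :=
  \sum_(A in F) m A.

Definition is_kfold_cover (T : finType) (F : {set {set T}}) (k : nat)
  (m : {set T} -> nat) : Prop :=
  forall x : T, (k <= \sum_(A in F | x \in A) m A)%N.

Definition tau_k_le (T : finType) (F : {set {set T}}) (k : nat) (N : Z) : Prop :=
  exists m, is_kfold_cover F k m /\ (Z.of_nat (multi_card F m) <= N)%Z.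

Definition is_frac_cover (T : finType) (F : {set {set T}}) (w : {set T} -> R) : Prop :=
  (forall A, A \in F -> Rle 0 (w A)) /\
  (forall x : T, Rle 1 (\big[Rplus/R0]_(A in F | x \in A) w A)).

Definition frac_weight (T : finType) (F : {set {set T}}) (w : {set T} -> R) : R :=
  \big[Rplus/R0]_(A in F) w A.

Definition is_inf (E : R -> Prop) (t : R) : Prop :=
  (forall s, E s -> Rle t s) /\
  (forall u, (forall s, E s -> Rle u s) -> Rle u t).

Definition is_frac_cover_number (T : finType) (F : {set {set T}}) (t : R) : Prop :=
  is_inf (fun s => exists w, is_frac_cover F w /\ frac_weight F w = s) t.

(* Main.v *)
Require Import Defs.
From Stdlib Require Import Reals ZArith Lra Lia Classical.
From HB Require Import structures.
From mathcomp Require Import all_boot.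
Set Implicit Arguments. Unset Strict Implicit. Unset Printing Implicit Defensive.
Lemma Rplus_0_l' : left_id R0 Rplus. Proof. by move=> x; rewrite Rplus_0_l. Qed.
Lemma RplusA' : associative Rplus. Proof. by move=> x y z; rewrite Rplus_assoc. Qed.
HB.instance Definition _ := Monoid.isComLaw.Build R R0 Rplus RplusA' Rplus_comm Rplus_0_l'.

Local Open Scope R_scope.

Section Sums.
Variable I : finType.

Lemma Rsum_le (P : pred I) (f g : I -> R) :
  (forall i, P i -> f i <= g i) ->
  \big[Rplus/R0]_(i | P i) f i <= \big[Rplus/R0]_(i | P i) g i.
Proof.
move=> H; apply: (big_ind2 (fun a b => a <= b)) => //; first lra.
by move=> a b c d; lra.
Qed.

Lemma Rsum_ge0 (P : pred I) (f : I -> R) :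
  (forall i, P i -> 0 <= f i) -> 0 <= \big[Rplus/R0]_(i | P i) f i.
Proof.
move=> H; apply: (big_ind (fun a => 0 <= a)) => //; first lra.
by move=> a b; lra.
Qed.

Lemma Rsum_distrr (P : pred I) (f : I -> R) a :
  a * \big[Rplus/R0]_(i | P i) f i = \big[Rplus/R0]_(i | P i) (a * f i).
Proof.
elim/big_rec2: _ => [|i x y _ <-]; first by rewrite Rmult_0_r.
by rewrite Rmult_plus_distr_l.
Qed.

Lemma Rsum_split (P : pred I) (f g : I -> R) :
  \big[Rplus/R0]_(i | P i) (f i + g i) =
  \big[Rplus/R0]_(i | P i) f i + \big[Rplus/R0]_(i | P i) g i.
Proof. by rewrite big_split. Qed.

Lemma Rsum_const (f : I -> R) c : (forall i, f i = c) ->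
  \big[Rplus/R0]_(i : I) f i = INR #|I| * c.
Proof.
move=> H; rewrite (eq_bigr (fun=> c)) // big_const.
elim: #|I| => [|n IH]; first by rewrite /=; lra.
rewrite S_INR /= IH; lra.
Qed.

Lemma Rsum_term (P : pred I) (f : I -> R) j :
  P j -> (forall i, P i -> 0 <= f i) -> f j <= \big[Rplus/R0]_(i | P i) f i.
Proof.
move=> Pj H; rewrite (bigD1 j) //=.
have : 0 <= \big[Rplus/R0]_(i | P i && (i != j)) f i.
  by apply: Rsum_ge0 => i /andP [] /H.
lra.
Qed.

Lemma Ravg (P : pred I) (p a : I -> R) :
  (forall i, P i -> 0 <= p i) -> \big[Rplus/R0]_(i | P i) p i = 1 ->
  exists2 i, P i & a i <= \big[Rplus/R0]_(i | P i) (p i * a i).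
Proof.
move=> p0 p1; apply: NNPP => Hn.
have Hall : forall i, P i -> \big[Rplus/R0]_(i | P i) (p i * a i) < a i.
  move=> i Pi; apply: Rnot_le_lt => Hle; apply: Hn; by exists i.
set S := \big[Rplus/R0]_(i | P i) (p i * a i) in Hall.
have E : \big[Rplus/R0]_(i | P i) (p i * (a i - S)) = S - S.
  rewrite (eq_bigr (fun i => p i * a i + (- S) * p i)); last by move=> i _; ring.
  by rewrite Rsum_split -Rsum_distrr p1 /S; ring.
have [j Pj pj] : exists2 j, P j & 0 < p j.
  apply: NNPP => H2.
  have : \big[Rplus/R0]_(i | P i) p i <= \big[Rplus/R0]_(i | P i) 0.
    apply: Rsum_le => i Pi; apply: Rnot_lt_le => h; apply: H2; by exists i.
  rewrite big1_eq p1; lra.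
have : p j * (a j - S) <= \big[Rplus/R0]_(i | P i) (p i * (a i - S)).
  apply: Rsum_term => // i Pi; apply: Rmult_le_pos; first exact: p0.
  by have := Hall i Pi; lra.
rewrite E; have := Hall j Pj => h1 h2.
have : 0 < p j * (a j - S) by apply: Rmult_lt_0_compat; lra.
lra.
Qed.
End Sums.

Section Comb.
Variables (T : finType) (F : {set {set T}}) (p : {set T} -> R) (th : R).
Hypothesis p0 : forall A, A \in F -> 0 <= p A.
Hypothesis p1 : \big[Rplus/R0]_(A in F) p A = 1.

Definition rr (x : T) := \big[Rplus/R0]_(A in F) (p A * th ^ nat_of_bool (x \in A)).
Definition Phi (c : T -> nat) N := \big[Rplus/R0]_(x : T) (th ^ c x * rr x ^ N).

Lemma step_id c N :
  \big[Rplus/R0]_(A in F) (p A * Phi (fun x => c x + nat_of_bool (x \in A))%nat N)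
  = Phi c N.+1.
Proof.
rewrite /Phi.
under eq_bigr do rewrite Rsum_distrr.
rewrite exchange_big /=; apply: eq_bigr => x _.
rewrite (eq_bigr (fun A => th ^ c x * rr x ^ N * (p A * th ^ nat_of_bool (x \in A)))).
  by rewrite -Rsum_distrr -/(rr x) /=; ring.
by move=> A _; rewrite pow_add; ring.
Qed.

Lemma exists_seq N : forall c : T -> nat, exists l : seq {set T},
  size l = N /\ all (fun A => A \in F) l /\
  \big[Rplus/R0]_(x : T) (th ^ (c x + count (fun A : {set T} => x \in A) l)) <= Phi c N.
Proof.
elim: N => [|N IH] c.
  exists [::]; split => //; split => //; rewrite /Phi; apply: Req_le.
  by apply: eq_bigr => x _ /=; rewrite addn0; ring.
have [A AF HA] := Ravg (P := mem F) (fun A : {set T} => Phi (fun x => c x + nat_of_bool (x \in A))%nat N) p0 p1.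
rewrite step_id in HA.
have [l [sl [al Hl]]] := IH (fun x => c x + nat_of_bool (x \in A))%nat.
exists (A :: l); split; first by rewrite /= sl.
split; first by rewrite /= al andbT; exact: AF.
apply: Rle_trans HA; apply: Rle_trans Hl; apply: Req_le.
by apply: eq_bigr => x _ /=; rewrite addnA.
Qed.
End Comb.

Lemma sum_count_mem (I : finType) (P : pred I) (l : seq I) :
  (\sum_(A | P A) count_mem A l)%N = count P l.
Proof.
elim: l => [|B l IH] /=; first by rewrite big1.
rewrite big_split /= IH; congr (_ + _)%N.
rewrite big_mkcond (bigD1 B) //= eqxx big1 => [|A /negbTE AB].
  by case: (P B).
by rewrite eq_sym AB; case: (P A).
Qed.

Lemma cover_from_seq (T : finType) (F : {set {set T}}) (k : nat) (l : seq {set T}) :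
  all (fun A => A \in F) l ->
  (forall x, k <= count (fun A : {set T} => x \in A) l)%N ->
  is_kfold_cover F k (fun A => count_mem A l) /\
  multi_card F (fun A => count_mem A l) = size l.
Proof.
move=> al Hk; split.
  move=> x; rewrite sum_count_mem.
  rewrite (eq_in_count (a2 := fun A : {set T} => x \in A)) ?Hk //.
  by move=> A Al /=; move/allP: al => /(_ A Al) ->.
rewrite /multi_card sum_count_mem.
by rewrite all_count in al; apply/eqP.
Qed.
Local Open Scope R_scope.
Lemma exp_pow u N : exp u ^ N = exp (INR N * u).
Proof.
elim: N => [|N IH]; first by rewrite /= Rmult_0_l exp_0.
rewrite S_INR /= IH -exp_plus; f_equal; ring.
Qed.

Lemma one_plus_le_exp u : 1 + u <= exp u.
Proof.
case: (Req_dec u 0) => [->|H]; first by rewrite exp_0; lra.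
by left; apply: exp_ineq1.
Qed.

Lemma exp_le x y : x <= y -> exp x <= exp y.
Proof. by case=> [h| ->]; [left; apply: exp_increasing| lra]. Qed.

Lemma analytic (n L y a D : R) (N k : nat) :
  0 < n -> L = ln n -> 0 < D -> (0 < k)%N ->
  y = D / (2 * INR k + D) -> D * D = L * (4 * INR k + 2 * D) ->
  0 < a <= 1 -> INR N * a >= INR k + D ->
  n * (1 - y * a) ^ N <= (1 - y) ^ k.
Proof.
move=> hn hL hD hk hy hDD ha hN.
have hkr : 0 < INR k by apply: lt_0_INR; apply/ltP.
have hy0 : 0 < y by rewrite hy; apply: Rdiv_lt_0_compat; lra.
have h1y : 1 - y = 2 * INR k / (2 * INR k + D) by rewrite hy; field; lra.
have hy1 : 0 < 1 - y by rewrite h1y; apply: Rdiv_lt_0_compat; lra.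
have E1 : n * (1 - y * a) ^ N <= exp (L - y * a * INR N).
  rewrite hL (_ : ln n - y * a * INR N = ln n + INR N * (- (y * a))); last by ring.
  rewrite exp_plus exp_ln // -exp_pow.
  apply: Rmult_le_compat_l; first lra.
  apply: pow_incr; split; first nra.
  have := one_plus_le_exp (- (y * a)); lra.
set u := y / (1 - y).
have E2 : exp (- (INR k * u)) <= (1 - y) ^ k.
  rewrite (_ : - (INR k * u) = INR k * (- u)); last by ring.
  rewrite -exp_pow; apply: pow_incr; split; first by left; apply: exp_pos.
  have hu := one_plus_le_exp u.
  have hu' : 1 + u = / (1 - y) by rewrite /u; field; lra.
  rewrite exp_Ropp -(Rinv_inv (1 - y)).
  apply: Rinv_le_contravar; [apply: Rinv_0_lt_compat; lra | lra].
apply: Rle_trans E1 _; apply: Rle_trans _ E2; apply: exp_le.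
have Hu : INR k * u = (2 * INR k + D) / 2 * y by rewrite /u h1y hy; field; lra.
rewrite Hu.
have HL : L = y * (D / 2).
  rewrite hy; apply: (Rmult_eq_reg_r (2 * (2 * INR k + D))); last lra.
  field_simplify; [nra|lra].
nra.
Qed.

Lemma Rceil_ge x : x <= IZR (Rceil x).
Proof. rewrite /Rceil opp_IZR; have [h _] := base_Int_part (- x); lra. Qed.
Lemma Rceil_lt x : IZR (Rceil x) < x + 1.
Proof. rewrite /Rceil opp_IZR; have [_ h] := base_Int_part (- x); lra. Qed.
Lemma Rceil_mono x y : x <= y -> (Rceil x <= Rceil y)%Z.
Proof.
move=> h; have h1 := Rceil_lt x; have h2 := Rceil_ge y.
have : IZR (Rceil x) < IZR (Rceil y + 1) by rewrite plus_IZR; lra.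
move/lt_IZR; lia.
Qed.

Lemma weight_ge1 (T : finType) (F : {set {set T}}) w (x : T) :
  is_frac_cover F w -> 1 <= frac_weight F w.
Proof.
move=> [w0 w1]; rewrite /frac_weight (bigID (fun A : {set T} => x \in A)) /=.
have := w1 x; have : 0 <= \big[Rplus/R0]_(A in F | x \notin A) w A.
  by apply: Rsum_ge0 => A /andP [/w0].
move=> ha hb; have := Rplus_le_compat _ _ _ _ hb ha; rewrite Rplus_0_r; exact.
Qed.

Lemma tstar_ge1 (T : finType) (F : {set {set T}}) t (x : T) :
  is_frac_cover_number F t -> 1 <= t.
Proof.
move=> [_ h]; apply: h => s [w [hw <-]]; exact: weight_ge1 x hw.
Qed.

Lemma exists_w (T : finType) (F : {set {set T}}) t eps :
  is_frac_cover_number F t -> 0 < eps ->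
  exists w, is_frac_cover F w /\ frac_weight F w < t + eps.
Proof.
move=> [h1 h2] he; apply: NNPP => Hn.
have : t + eps <= t.
  apply: h2 => s [w [hw <-]]; apply: Rnot_lt_le => hl; apply: Hn; by exists w.
lra.
Qed.

Lemma pow_mono_inv th a b : 0 < th < 1 -> th ^ a <= th ^ b -> (b <= a)%N.
Proof.
move=> hth h; rewrite leqNgt; apply/negP => hab; move: h.
have [m ->] : exists m, b = (a + m.+1)%N by exists (b - a.+1)%N; rewrite addnS -addSn subnKC.
rewrite pow_add.
have : 0 <= th ^ m.+1 < 1 by apply: pow_lt_1_compat; [lra| apply/ltP].
have : 0 < th ^ a by apply: pow_lt; lra.
nra.
Qed.
Close Scope R_scope.

Theorem mainTheorem10 (T : finType) (F : {set {set T}}) (k : nat) (tstar : R) :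
  (0 < #|T|)%N ->
  \bigcup_(A in F) A = [set: T] ->
  is_frac_cover_number F tstar ->
  (0 < k)%N ->
  let L := ln (INR #|T|) in
  tau_k_le F k
    (Rceil (tstar * (INR k + 3/2 * L + 3/2 * sqrt ((4 * INR k + L) * L))))
  /\
  (Rceil (tstar * (INR k + 3/2 * L + 3/2 * sqrt ((4 * INR k + L) * L)))
     <= Rceil (6 * tstar * Rmax L (INR k)))%Z.
Proof.
move=> hn hcup hts hk L.
Local Open Scope R_scope.
have [x0 _] := card_gt0P hn.
have ts1 : 1 <= tstar := tstar_ge1 x0 hts.
have hkr : 1 <= INR k by apply: (le_INR 1); apply/leP.
have hnr : 1 <= INR #|T| by apply: (le_INR 1); apply/leP.
have L0 : 0 <= L.
  rewrite /L; case: hnr => h; last by rewrite -h ln_1; lra.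
  by left; rewrite -ln_1; apply: ln_increasing; lra.
set S := sqrt ((4 * INR k + L) * L).
have S0 : 0 <= S by apply: sqrt_pos.
have SS : S * S = (4 * INR k + L) * L by apply: sqrt_sqrt; nra.
split; last first.
  apply: Rceil_mono.
  set M := Rmax L (INR k).
  have hL : L <= M by apply: Rmax_l.
  have hK : INR k <= M by apply: Rmax_r.
  have hS : S <= 7/3 * M.
    apply: Rsqr_incr_0_var; rewrite /Rsqr; nra.
  nra.
have [n1|n2] := boolP (#|T| == 1)%N.
  have hL : L = 0 by rewrite /L (eqP n1) /= ln_1.
  have : x0 \in \bigcup_(A in F) A by rewrite hcup inE.
  case/bigcupP => A0 A0F x0A0.
  have all1 : forall x : T, x = x0.
    move=> x; have /fintype_le1P h := (eq_leq (eqP n1)); exact: h.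
  have hall : all (fun A => A \in F) (nseq k A0) by rewrite all_nseq A0F orbT.
  have hcnt : forall x, (k <= count (fun A : {set T} => x \in A) (nseq k A0))%N.
    by move=> x; rewrite count_nseq (all1 x) x0A0 mul1n.
  have [cov card] := cover_from_seq hall hcnt.
  exists (fun A => count_mem A (nseq k A0)); split => //.
  rewrite card size_nseq; apply: le_IZR; rewrite -INR_IZR_INZ.
  apply: Rle_trans (Rceil_ge _).
  have S_0 : S = 0 by rewrite /S hL Rmult_0_r sqrt_0.
  rewrite S_0 hL; nra.
have n2r : 2 <= INR #|T|.
  apply: (le_INR 2); apply/leP; by rewrite ltn_neqAle eq_sym n2 hn.
have Lp : 0 < L by rewrite /L -ln_1; apply: ln_increasing; lra.
set D := L + S.
have Dp : 0 < D by rewrite /D; lra.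
have DD : D * D = L * (4 * INR k + 2 * D) by rewrite /D; nra.
set c := INR k + 3/2 * D.
have Ec : INR k + 3/2 * L + 3/2 * S = c by rewrite /c /D; ring.
rewrite Ec.
have kD : 0 < INR k + D by lra.
have [w [hw ht]] := exists_w hts (eps := tstar * (c / (INR k + D) - 1))
  ltac:(apply: Rmult_lt_0_compat; [lra|]; apply: (Rplus_lt_reg_r 1);
        rewrite Rplus_0_l; unfold Rminus; rewrite Rplus_assoc Rplus_opp_l Rplus_0_r;
        apply: (Rmult_lt_reg_r (INR k + D)); [lra|];
        unfold Rdiv; rewrite Rmult_assoc Rinv_l; [rewrite /c; lra| lra]).
set t' := frac_weight F w in ht.
have t1 : 1 <= t' := weight_ge1 x0 hw.
have t'c : (INR k + D) * t' < tstar * c.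
  have : (INR k + D) * t' < (INR k + D) * (tstar + tstar * (c / (INR k + D) - 1)).
    by apply: Rmult_lt_compat_l.
  have -> : (INR k + D) * (tstar + tstar * (c / (INR k + D) - 1)) = tstar * c.
    by field; lra.
  done.
pose p := fun A => / t' * w A.
have p0 : forall A, A \in F -> 0 <= p A.
  move=> A AF; rewrite /p; apply: Rmult_le_pos; last by case: hw => h _; exact: h.
  by left; apply: Rinv_0_lt_compat; lra.
have p1 : \big[Rplus/R0]_(A in F) p A = 1.
  by rewrite /p -Rsum_distrr -/(frac_weight F w) -/t'; field; lra.
set y := D / (2 * INR k + D).
set th := 1 - y.
have hy0 : 0 < y by rewrite /y; apply: Rdiv_lt_0_compat; lra.
have hy1 : y < 1.
  rewrite /y; apply: (Rmult_lt_reg_r (2 * INR k + D)); first lra.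
  unfold Rdiv; rewrite Rmult_assoc Rinv_l; lra.
set N := Z.to_nat (Rceil (tstar * c)).
have hc0 : 0 <= tstar * c by rewrite /c; nra.
have hR0 : (0 <= Rceil (tstar * c))%Z.
  apply: le_IZR; have := Rceil_ge (tstar * c); lra.
have hN : INR N = IZR (Rceil (tstar * c)) by rewrite INR_IZR_INZ Znat.Z2Nat.id.
have [l [sl [al Hl]]] := @exists_seq T F p th p0 p1 N (fun=> 0%N).
have rrE : forall x, rr F p th x =
    1 - y * \big[Rplus/R0]_(A in F | x \in A) p A.
  move=> x; rewrite /rr (bigID (fun A : {set T} => x \in A)) /=.
  rewrite [X in X + _](eq_bigr (fun A => th * p A)); last by move=> A /andP [_ ->]; rewrite /=; ring.
  rewrite [X in _ + X](eq_bigr (fun A => p A)); last by move=> A /andP [_ xA]; rewrite (negbTE xA) /=; ring.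
  move: p1; rewrite (bigID (fun A : {set T} => x \in A)) /= => p1'.
  rewrite -Rsum_distrr /th; set G := (X in _ = 1 - y * X); move: p1'; rewrite -/G; lra.
have Gb : forall x, / t' <= \big[Rplus/R0]_(A in F | x \in A) p A <= 1.
  move=> x; split.
    rewrite /p -Rsum_distrr; case: hw => _ h; have := h x => hx.
    rewrite -[X in X <= _]Rmult_1_r; apply: Rmult_le_compat_l => //.
    by left; apply: Rinv_0_lt_compat; lra.
  move: p1; rewrite (bigID (fun A : {set T} => x \in A)) /=.
  set G := (X in X <= 1); rewrite -/G.
  set H := (X in G + X = 1) => p1'.
  have : 0 <= H by apply: Rsum_ge0 => A /andP [/p0].
  lra.
have ainv : 0 < / t' <= 1.
  split; first by apply: Rinv_0_lt_compat; lra.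
  rewrite -Rinv_1; apply: Rinv_le_contravar; lra.
have Phib : Phi F p th (fun=> 0%N) N <= INR #|T| * (1 - y * / t') ^ N.
  rewrite /Phi -(Rsum_const (f := fun=> (1 - y * / t') ^ N)) //.
  apply: Rsum_le => x _; rewrite /= Rmult_1_l; apply: pow_incr.
  rewrite rrE; have := Gb x; nra.
have An := @analytic (INR #|T|) L y (/ t') D N k
  ltac:(lra) erefl Dp hk erefl DD ainv
  ltac:(rewrite hN; apply: Rle_ge;
        apply: (Rmult_le_reg_r t'); [lra|]; rewrite Rmult_assoc Rinv_l; [|lra];
        have := Rceil_ge (tstar * c); lra).
have hcnt : forall x, (k <= count (fun A : {set T} => x \in A) l)%N.
  move=> x; apply: (pow_mono_inv (th := th)); first by rewrite /th; lra.
  apply: Rle_trans An; apply: Rle_trans Phib; apply: Rle_trans Hl.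
  have := Rsum_term (P := predT)
     (f := fun x => th ^ (0 + count (fun A : {set T} => x \in A) l)%N) (j := x) erefl.
  rewrite add0n; apply => i _; apply: pow_le; rewrite /th; lra.
have [cov card] := cover_from_seq al hcnt.
exists (fun A => count_mem A l); split => //.
by rewrite card sl /N Znat.Z2Nat.id //; lia.
Qed.
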